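(* In the setting below, if the minimal semigroup $\{P(t)\}_{t\ge0}$ has an invariant density $\tilde f$ with $\tilde f>0$ $m$-a.e., then $\{P(t)\}_{t\ge0}$ is stochastic.
   Context: Setting: $(E,\mathcal{E},m)$ is a $\sigma$-finite measure space, $L^1=L^1(E,\mathcal{E},m)$, $L^1_+$ its nonnegative elements, $D(m)=\{f\in L^1_+:\|f\|=1\}$ the densities. A linear operator on $L^1$ is stochastic if it maps $D(m)$ into $D(m)$, substochastic if it is a positive contraction; a (sub)stochastic semigroup is a $C_0$-semigroup of (sub)stochastic operators. A substochastic operator $Q$ is extended to nonnegative measurable $f=\sup_n f_n$ ($0\le f_n\uparrow$, $f_n\in L^1_+$) by $Qf=\sup_nQf_n$ (possibly $+\infty$); $f\ge0$ measurable is subinvariant (invariant) for $Q$ if $Qf\le f$ ($Qf=f$), and for a semigroup if this holds for each $P(t)$. Let $P$ be a stochastic operator on $L^1$, $\varphi\colon E\to[0,\infty)$ measurable, and $\{S(t)\}_{t\ge0}$ a substochastic semigroup with generator $(A,\mathcal{D}(A))$ such that $\mathcal{D}(A)\subseteq L^1_\varphi=\{f\in L^1:\int\varphi|f|\,dm<\infty\}$ and $\int_E Af\,dm=-\int_E\varphi f\,dm$ for all $f\in\mathcal{D}(A)\cap L^1_+$. $R(\lambda,A)=(\lambda-A)^{-1}=\int_0^\infty e^{-\lambda s}S(s)\,ds$ for $\lambda>0$. The minimal semigroup $\{P(t)\}_{t\ge0}$ is the substochastic semigroup whose generator $(\mathcal{C},\mathcal{D}(\mathcal{C}))$ is given by $R(\lambda,\mathcal{C})f=\lim_{n\to\infty}R(\lambda,A)\sum_{k=0}^n(P(\varphi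 R(\lambda,A)))^kf$ for $f\in L^1$, $\lambda>0$; it satisfies $\mathcal{D}(A)\subseteq\mathcal{D}(\mathcal{C})$ and $\mathcal{C}f=Af+P(\varphi f)$ for $f\in\mathcal{D}(A)$. *)

(* Defs.v *)
From HB Require Import structures.
From mathcomp Require Import all_boot all_order all_algebra.
From mathcomp Require Import all_classical all_reals all_analysis.

Set Implicit Arguments.
Unset Strict Implicit.
Unset Printing Implicit Defensive.

Import Order.TTheory GRing.Theory Num.Theory.
Import numFieldNormedType.Exports.

Local Open Scope classical_set_scope.
Local Open Scope ring_scope.

(* Elements of L^1(E,m) are represented by real functions E -> R that are
   m-integrable; two representatives denote the same element of L^1 iff they
   agree m-a.e.  (Linear) operators on L^1 are represented by maps on
   representatives that send integrable functions to integrable functions and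
   respect a.e.-equality. *)

Definition Op (E : Type) (R : realType) := (E -> R) -> (E -> R).

Section L1.
Context d (E : measurableType d) (R : realType) (m : {measure set E -> \bar R}).

Definition L1 (f : E -> R) : Prop := m.-integrable setT (EFin \o f).

Definition aeeq (f g : E -> R) : Prop := {ae m, forall x, f x = g x}.

Definition aenonneg (f : E -> R) : Prop := {ae m, forall x, 0 <= f x}.

Definition L1norm (f : E -> R) : \bar R := (\int[m]_x `|f x|%:E)%E.

Definition L1plus (f : E -> R) : Prop := L1 f /\ aenonneg f.

Definition density (f : E -> R) : Prop := L1plus f /\ L1norm f = 1%E.

Definition linear_op (Q : Op E R) : Prop :=
  [/\ (forall f, L1 f -> L1 (Q f)),
      (forall f g, L1 f -> L1 g -> aeeq f g -> aeeq (Q f) (Q g)) &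
      (forall (a : R) f g, L1 f -> L1 g ->
         aeeq (Q (fun x => a * f x + g x)) (fun x => a * Q f x + Q g x))].

Definition stochastic (Q : Op E R) : Prop :=
  linear_op Q /\ (forall f, density f -> density (Q f)).

Definition substochastic (Q : Op E R) : Prop :=
  [/\ linear_op Q,
      (forall f, L1plus f -> aenonneg (Q f)) &
      (forall f, L1 f -> (L1norm (Q f) <= L1norm f)%E)].

(* C_0-semigroup on L^1 (the operators are bounded as soon as they are
   substochastic, which is the only case used below) *)
Definition C0_semigroup (S : R -> Op E R) : Prop :=
  [/\ (forall t, 0 <= t -> linear_op (S t)),
      (forall f, L1 f -> aeeq (S 0 f) f),
      (forall s t f, 0 <= s -> 0 <= t -> L1 f ->
         aeeq (S (s + t) f) (S s (S t f))) &
      (forall f, L1 f ->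
         (fun t => L1norm (fun x => S t f x - f x)) @ 0^'+ --> 0%E)].

Definition substochastic_semigroup (S : R -> Op E R) : Prop :=
  C0_semigroup S /\ (forall t, 0 <= t -> substochastic (S t)).

Definition stochastic_semigroup (S : R -> Op E R) : Prop :=
  C0_semigroup S /\ (forall t, 0 <= t -> stochastic (S t)).

Definition is_generator (S : R -> Op E R) (D : set (E -> R)) (A : Op E R) :
  Prop :=
  [/\ (forall f, D f -> L1 f),
      (forall f, L1 f ->
         (D f <-> exists g, L1 g /\
            (fun t => L1norm (fun x => (S t f x - f x) / t - g x))
              @ 0^'+ --> 0%E)) &
      (forall f, D f -> L1 (A f) /\
            (fun t => L1norm (fun x => (S t f x - f x) / t - A f x))
              @ 0^'+ --> 0%E)].

(* the resolvent R(lambda, A) = (lambda - A)^{-1}: R(lambda,A) g is an element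
   u of D with lambda u - A u = g (unique up to a.e. equality when lambda is in
   the resolvent set, e.g. lambda > 0 for generators of contraction
   semigroups) *)
Definition resolvent (D : set (E -> R)) (A : Op E R) (lambda : R) : Op E R :=
  fun g => xget (fun _ => 0)
    [set u | D u /\ aeeq (fun x => lambda * u x - A u x) g].

Definition L1phi (phi : E -> R) (f : E -> R) : Prop :=
  L1 f /\ (\int[m]_x (phi x * `|f x|)%:E < +oo)%E.

Definition KP (P : Op E R) (phi : E -> R) (D : set (E -> R)) (A : Op E R)
  (lambda : R) : Op E R :=
  fun f => P (fun x => phi x * resolvent D A lambda f x).

Definition minimal_semigroup (P : Op E R) (phi : E -> R) (D : set (E -> R))
  (A : Op E R) (Pt : R -> Op E R) : Prop :=
  substochastic_semigroup Pt /\
  exists (DC : set (E -> R)) (C : Op E R),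
    is_generator Pt DC C /\
    forall (lambda : R) (f : E -> R), 0 < lambda -> L1 f ->
      (fun n : nat =>
         L1norm (fun x =>
           resolvent D A lambda
             (fun y => \sum_(k < n.+1) iter k (KP P phi D A lambda) f y) x
           - resolvent DC C lambda f x)) @ \oo --> 0%E.

End L1.

(* Main.v *)
Require Import Defs.
From HB Require Import structures.
From mathcomp Require Import all_boot all_order all_algebra.
From mathcomp Require Import all_classical all_reals all_analysis.
From mathcomp Require Import lra measurable_realfun.
Import Order.TTheory GRing.Theory Num.Theory.
Import numFieldNormedType.Exports.
Local Open Scope classical_set_scope.
Local Open Scope ring_scope.

Set Implicit Arguments.
Unset Strict Implicit.


Definition Ir d (E : measurableType d) (R : realType)
  (m : {measure set E -> \bar R}) (g : E -> R) : R :=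
  fine (\int[m]_x (g x)%:E)%E.

Lemma L1_int d (E : measurableType d) (R : realType)
  (m : {measure set E -> \bar R}) (g : E -> R) :
  L1 m g -> (\int[m]_x (g x)%:E)%E = (Ir m g)%:E.
Proof. by move=> h; rewrite /Ir fineK//; exact: integrable_fin_num h. Qed.

Lemma L1_meas d (E : measurableType d) (R : realType)
  (m : {measure set E -> \bar R}) (g : E -> R) :
  L1 m g -> measurable_fun setT g.
Proof. by move=> h; apply/measurable_realfun.measurable_EFinP; exact: measurable_int h. Qed.

Lemma Ir_ae d (E : measurableType d) (R : realType)
  (m : {measure set E -> \bar R}) (g h : E -> R) :
  L1 m g -> L1 m h -> aeeq m g h -> Ir m g = Ir m h.
Proof.
move=> Lg Lh gh; rewrite /Ir; congr fine.
apply: ae_eq_integral => //.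
- exact: (measurable_int _ Lg).
- exact: (measurable_int _ Lh).
- by apply: filterS gh => x /= ->.
Qed.

Lemma L1_lin d (E : measurableType d) (R : realType)
  (m : {measure set E -> \bar R}) (a : R) (g h : E -> R) :
  L1 m g -> L1 m h -> L1 m (fun x => a * g x + h x).
Proof.
move=> Lg Lh; rewrite /L1.
have -> : (EFin \o (fun x => a * g x + h x)) =
   ((fun x => a%:E * (EFin \o g) x) \+ (EFin \o h))%E.
  by apply/funext => x /=; rewrite EFinD EFinM.
apply: integrableD => //; exact: integrableZl.
Qed.

Lemma Ir_lin d (E : measurableType d) (R : realType)
  (m : {measure set E -> \bar R}) (a : R) (g h : E -> R) :
  L1 m g -> L1 m h -> Ir m (fun x => a * g x + h x) = a * Ir m g + Ir m h.
Proof.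
move=> Lg Lh.
have Lag : L1 m (fun x => a * g x).
  rewrite /L1; have -> : (EFin \o (fun x => a * g x)) = (fun x => a%:E * (EFin \o g) x)%E.
    by apply/funext => x /=; rewrite EFinM.
  exact: integrableZl.
rewrite /Ir.
have -> : (\int[m]_x ((a * g x + h x)%:E))%E =
   (\int[m]_x ((EFin \o (fun x => (a * g x)%R)) \+ (EFin \o h)) x)%E.
  by apply: eq_integral => x _ /=; rewrite EFinD.
rewrite integralD_EFin //.
have -> : (\int[m]_x (EFin \o (fun x => (a * g x)%R)) x)%E =
   (\int[m]_x (a%:E * (EFin \o g) x))%E.
  by apply: eq_integral => x _ /=; rewrite EFinM.
rewrite integralZl //.
by rewrite !L1_int // -EFinM -EFinD.
Qed.

Lemma L1plus_norm d (E : measurableType d) (R : realType)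
  (m : {measure set E -> \bar R}) (g : E -> R) :
  L1plus m g -> L1norm m g = (Ir m g)%:E.
Proof.
move=> [Lg g0]; rewrite -L1_int // /L1norm.
apply: ae_eq_integral => //.
- apply/measurable_realfun.measurable_EFinP; apply: measurableT_comp => //; exact: L1_meas Lg.
- exact: (measurable_int _ Lg).
- by apply: filterS g0 => x /= gx _; rewrite ger0_norm.
Qed.

Lemma Ir_ge0 d (E : measurableType d) (R : realType)
  (m : {measure set E -> \bar R}) (g : E -> R) :
  L1plus m g -> 0 <= Ir m g.
Proof.
move=> h; have := L1plus_norm h; rewrite /L1norm => e.
rewrite -lee_fin -e; by apply: integral_ge0 => x _; rewrite lee_fin.
Qed.


Lemma L1_0 d (E : measurableType d) (R : realType)
  (m : {measure set E -> \bar R}) (f : E -> R) :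
  L1 m f -> L1 m (fun _ => 0).
Proof.
move=> Lf; apply: (le_integrable _ _ _ Lf) => //.
- exact: measurable_cst.
- by move=> x _ /=; rewrite normr0 lee_fin.
Qed.

Lemma Q_L1plus d (E : measurableType d) (R : realType)
  (m : {measure set E -> \bar R}) (Q : Op E R) g :
  substochastic m Q -> L1plus m g -> L1plus m (Q g).
Proof. by move=> [[Q1 _ _] Qp _] [Lg g0]; split; [exact: Q1|exact: Qp]. Qed.

Lemma Q_le d (E : measurableType d) (R : realType)
  (m : {measure set E -> \bar R}) (Q : Op E R) g :
  substochastic m Q -> L1plus m g -> Ir m (Q g) <= Ir m g.
Proof.
move=> Qs Pg; have PQg := Q_L1plus Qs Pg.
case: Qs => _ _ Qc; have := Qc g Pg.1.
by rewrite (L1plus_norm PQg) (L1plus_norm Pg) lee_fin.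
Qed.

Lemma Q_lin d (E : measurableType d) (R : realType)
  (m : {measure set E -> \bar R}) (Q : Op E R) (a : R) g h :
  substochastic m Q -> L1 m g -> L1 m h ->
  Ir m (Q (fun x => a * g x + h x)) = a * Ir m (Q g) + Ir m (Q h).
Proof.
move=> [[Q1 _ Ql] _ _] Lg Lh.
rewrite -Ir_lin; [|exact: Q1|exact: Q1].
apply: Ir_ae; [exact/Q1/L1_lin| |exact: Ql].
by apply: L1_lin; apply: Q1.
Qed.

Lemma Q_zero d (E : measurableType d) (R : realType)
  (m : {measure set E -> \bar R}) (Q : Op E R) (f : E -> R) :
  substochastic m Q -> L1 m f -> Ir m (Q (fun _ => 0)) = 0.
Proof.
move=> Qs Lf; have L0 := L1_0 Lf.
have P0 : L1plus m (fun _ : E => 0) by split => //; exact: aeW.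
have Iz : Ir m (fun _ : E => 0) = 0.
  have := Ir_lin (-1) L0 L0.
  have -> : (fun x : E => -1 * 0 + 0) = (fun _ : E => 0 :> R).
    by apply/funext => x; rewrite mulr0 addr0.
  move=> e; lra.
apply/eqP; rewrite eq_le; apply/andP; split.
- by rewrite -[X in _ <= X]Iz; exact: Q_le.
- exact/Ir_ge0/Q_L1plus.
Qed.

Lemma Ir_zero d (E : measurableType d) (R : realType)
  (m : {measure set E -> \bar R}) (f : E -> R) :
  L1 m f -> Ir m (fun _ : E => 0) = 0.
Proof.
move=> Lf; have L0 := L1_0 Lf.
have := Ir_lin (-1) L0 L0.
have -> : (fun x : E => -1 * 0 + 0) = (fun _ : E => 0 :> R).
  by apply/funext => x; rewrite mulr0 addr0.
move=> e; lra.
Qed.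

Lemma step d (E : measurableType d) (R : realType)
  (m : {measure set E -> \bar R}) (Q : Op E R) (Qs : substochastic m Q)
  (ft : E -> R) (Lft : L1 m ft) (fti : aeeq m (Q ft) ft)
  (f : E -> R) (Lf : L1 m f) (g : E -> R) (Pg : L1plus m g) (c : R)
  (gf : {ae m, forall x, g x <= f x})
  (gc : {ae m, forall x, g x <= c * ft x}) :
  Ir m g <= Ir m (Q f).
Proof.
have Q1 : forall f, L1 m f -> L1 m (Q f) by case: Qs => [[]].
have Lz := L1_0 Lf.
pose N := fun x => c * ft x + (fun _ : E => 0) x.
have LN : L1 m N by exact: L1_lin.
pose h := fun x => -1 * g x + N x.
have Lh : L1 m h by exact: L1_lin Pg.1 LN.
have Ph : L1plus m h.
  split => //; apply: filterS gc => x /= gx.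
  by rewrite /h /N; lra.
have eN : N = (fun x => 1 * g x + h x).
  by apply/funext => x; rewrite /h; lra.
have I1 := Q_lin c Qs Lft Lz.
rewrite -/N (Q_zero Qs Lf) (Ir_ae (Q1 _ Lft) Lft fti) in I1.
have I2 := Q_lin 1 Qs Pg.1 Lh; rewrite -eN in I2.
have I3 := Q_le Qs Ph.
rewrite /h (Ir_lin (-1) Pg.1 LN) /N (Ir_lin c Lft Lz) (Ir_zero Lf) in I3.
pose r := fun x => -1 * g x + f x.
have Lr : L1 m r by exact: L1_lin Pg.1 Lf.
have Pr : L1plus m r.
  split => //; apply: filterS gf => x /= gx.
  by rewrite /r; lra.
have ef : f = (fun x => 1 * g x + r x).
  by apply/funext => x; rewrite /r; lra.
have I4 := Q_lin 1 Qs Pg.1 Lr; rewrite -ef in I4.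
have I5 := Ir_ge0 (Q_L1plus Qs Pr).
move: I1 I2 I3 I4 I5.
set X := c * Ir m ft.
rewrite -/N -/h.
lra.
Qed.


Definition gcut (R : realType) (a b c : R) : R := Num.min (Num.max a 0) (c * Num.max b 0).

Lemma gcut_ge0 (R : realType) (a b c : R) : 0 <= c -> 0 <= gcut a b c.
Proof.
move=> c0; rewrite /gcut le_min le_max lexx orbT /=.
by apply: mulr_ge0 => //; rewrite le_max lexx orbT.
Qed.

Lemma gcut_le_max (R : realType) (a b c : R) : gcut a b c <= Num.max a 0.
Proof. by rewrite /gcut ge_min lexx. Qed.

Lemma gcut_le_f (R : realType) (a b c : R) : 0 <= a -> gcut a b c <= a.
Proof.
move=> a0; apply: le_trans (gcut_le_max a b c) _.
by rewrite ge_max lexx a0.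
Qed.

Lemma gcut_le_c (R : realType) (a b c : R) : 0 <= b -> gcut a b c <= c * b.
Proof.
move=> b0; rewrite /gcut; have -> : Num.max b 0 = b by apply/max_idPl.
by rewrite ge_min lexx orbT.
Qed.

Lemma gcut_norm (R : realType) (a b c : R) : 0 <= c -> `|gcut a b c| <= `|a|.
Proof.
move=> c0; rewrite ger0_norm ?gcut_ge0 //.
apply: le_trans (gcut_le_max a b c) _.
by rewrite ge_max ler_norm normr_ge0.
Qed.

Lemma gcut_mono (R : realType) (a b c c' : R) : c <= c' ->
  gcut a b c <= gcut a b c'.
Proof.
move=> cc; rewrite /gcut le_min ge_min lexx /= ge_min; apply/orP; right.
by apply: ler_wpM2r => //; rewrite le_max lexx orbT.
Qed.

Lemma gcut_eq (R : realType) (a b c : R) : 0 < b -> 0 <= a -> a / b <= c ->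
  gcut a b c = a.
Proof.
move=> b0 a0 abc; rewrite /gcut.
have -> : Num.max b 0 = b by apply/max_idPl/ltW.
have -> : Num.max a 0 = a by apply/max_idPl.
by apply/min_idPl; rewrite -ler_pdivrMr.
Qed.

Lemma key d (E : measurableType d) (R : realType)
  (m : {measure set E -> \bar R}) (Q : Op E R) (Qs : substochastic m Q)
  (ft : E -> R) (ftd : density m ft) (fti : aeeq m (Q ft) ft)
  (ftp : {ae m, forall x, 0 < ft x})
  (f : E -> R) (fd : density m f) : density m (Q f).
Proof.
have Lf := fd.1.1; have Lft := ftd.1.1.
have Pf := Q_L1plus Qs fd.1.
split => //; rewrite (L1plus_norm Pf).
have If : Ir m f = 1.
  by have := fd.2; rewrite (L1plus_norm fd.1) => -[].
suff : 1 <= Ir m (Q f).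
  by have := Q_le Qs fd.1; rewrite If => h1 h2; congr EFin; apply/eqP; rewrite eq_le h1 h2.
pose gn (n : nat) := fun x => gcut (f x) (ft x) n%:R.
have mgn : forall n, measurable_fun setT (gn n).
  move=> n; rewrite /gn /gcut; apply: measurable_realfun.measurable_minr.
    by apply: measurable_realfun.measurable_maxr => //; exact: L1_meas Lf.
  apply: measurable_realfun.measurable_funM => //; apply: measurable_realfun.measurable_maxr => //; exact: L1_meas Lft.
have Lgn : forall n, L1 m (gn n).
  move=> n; apply: (le_integrable _ _ _ Lf) => //.
    exact/measurable_realfun.measurable_EFinP.
  by move=> x _ /=; rewrite lee_fin gcut_norm.
have stepn : forall n, Ir m (gn n) <= Ir m (Q f).
  move=> n; have Pgn : L1plus m (gn n).
    split; first exact: Lgn.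
    by apply: aeW => x; rewrite /gn gcut_ge0.
  apply: (@step _ _ _ m Q Qs ft Lft fti f Lf (gn n) Pgn n%:R).
  - by apply: filterS fd.1.2 => x /= fx; rewrite /gn gcut_le_f.
  - by apply: filterS ftd.1.2 => x /= fx; rewrite /gn gcut_le_c.
pose g' (n : nat) := fun x => ((gn n x)%:E)%E.
have mg' : forall n, measurable_fun [set: E] (EFin \o gn n).
  by move=> n; apply/measurable_realfun.measurable_EFinP.
have g'0 : forall n x, setT x -> (0 <= g' n x)%E.
  by move=> n x _; rewrite lee_fin gcut_ge0.
have ndg' : forall x, setT x -> {homo g'^~ x : n k / (n <= k)%N >-> (n <= k)%E}.
  by move=> x _ n k nk; rewrite lee_fin gcut_mono // ler_nat.
have MC := monotone_convergence m measurableT mg' g'0 ndg'.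
have ndI : {homo (fun n => \int[m]_x g' n x)%E : n k / (n <= k)%N >-> (n <= k)%E}.
  move=> n k nk; apply: ge0_le_integral => //.
  - by move=> x _; rewrite lee_fin gcut_ge0.
  - exact: mg'.
  - exact: mg'.
  - by move=> x _; rewrite lee_fin gcut_mono // ler_nat.
have limle : (limn (fun n => \int[m]_x g' n x) <= (Ir m (Q f))%:E)%E.
  apply: lime_le; first exact: ereal_nondecreasing_is_cvgn.
  by apply: nearW => n; rewrite /g' L1_int // lee_fin.
rewrite -lee_fin -If -L1_int //.
apply: le_trans limle; rewrite -MC le_eqVlt; apply/orP; left; apply/eqP.
apply: ae_eq_integral => //.
- exact: (measurable_int _ Lf).
- apply: (measurable_realfun.emeasurable_fun_cvg g') => // x _.
  by apply: ereal_nondecreasing_is_cvgn => n k nk; exact: ndg'.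
- apply: filterS2 ftp fd.1.2 => x /= ftx fx _.
  apply/esym/lim_near_cst => //.
  exists (Num.Def.archi_bound (f x / ft x)) => // n /= Nn.
  rewrite /g' /gn gcut_eq //.
  apply: ltW; apply: lt_le_trans (archi_boundP _) _.
    by apply: divr_ge0 => //; exact: ltW.
  by rewrite ler_nat.
Qed.

Unset Implicit Arguments.
Set Strict Implicit.

Theorem mainTheorem6 (d : measure_display) (E : measurableType d)
  (R : realType) (m : {measure set E -> \bar R})
  (m_sigma_finite : sigma_finite setT m)
  (P : Op E R) (P_stoch : stochastic m P)
  (phi : E -> R) (phi_meas : measurable_fun setT phi)
  (phi_ge0 : forall x, 0 <= phi x)
  (S : R -> Op E R) (D : set (E -> R)) (A : Op E R)
  (S_sub : substochastic_semigroup m S)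
  (A_gen : is_generator m S D A)
  (D_sub : forall f, D f -> L1phi m phi f)
  (A_int : forall f, D f -> aenonneg m f ->
     (\int[m]_x (A f x)%:E = - \int[m]_x (phi x * f x)%:E)%E)
  (Pt : R -> Op E R) (Pt_min : minimal_semigroup m P phi D A Pt)
  (ft : E -> R) (ft_dens : density m ft)
  (ft_inv : forall t, 0 <= t -> aeeq m (Pt t ft) ft)
  (ft_pos : {ae m, forall x, 0 < ft x}) :
  stochastic_semigroup m Pt.
Proof.
case: Pt_min => [[C0 Psub] _]; split => // t t0.
have Qs := Psub t t0; split; first by case: Qs.
move=> f fd; exact: (key Qs ft_dens (ft_inv t t0) ft_pos fd).
Qed.
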